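(* Let $A$ be a bounded distributive lattice and $X$ its Priestley space. The following are equivalent: (1) $A$ is proHeyting; (2) for all clopen upsets $U,V$ of $X$, $X\setminus{\downarrow}(U\setminus V)$ is a DM-set; (3) for every clopen subset $U$ of $X$, $X\setminus{\downarrow}U$ is a DM-set.
   Context: A relative annihilator of $A$ is $\langle a,b\rangle=\{x\in A:a\wedge x\le b\}$; $A$ is proHeyting if every relative annihilator is a normal ideal (a downset $N$ with $N=N^{u\ell}$). The Priestley space $X$ of $A$ is the set of prime filters ordered by inclusion, topologized by the basis $\{\mathfrak s(a)\setminus\mathfrak s(b)\}$ with $\mathfrak s(a)=\{x:a\in x\}$; $\mathfrak s$ is an isomorphism of $A$ onto the clopen upsets of $X$. With ${\sf cl}$ the topological closure, ${\sf cl_2}(S)={\uparrow}{\sf cl}(S)$ and ${\sf int_1}(S)=X\setminus{\downarrow}(X\setminus{\sf int}(S))$, a DM-set is an open upset $U$ with ${\sf int_1\,cl_2}(U)=U$. *)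

(* Defs.v *)
From HB Require Import structures.
From mathcomp Require Import all_boot all_order.
Set Implicit Arguments. Unset Strict Implicit. Unset Printing Implicit Defensive.
Import Order.TTheory.
Local Open Scope order_scope.

Section Priestley.
Context {disp : Order.disp_t} (A : tbDistrLatticeType disp).

Definition lower_set (N : A -> Prop) : Prop :=
  forall x y : A, N x -> y <= x -> N y.

Definition upper_bounds (N : A -> Prop) : A -> Prop :=
  fun y => forall x, N x -> x <= y.
Definition lower_bounds (N : A -> Prop) : A -> Prop :=
  fun y => forall x, N x -> y <= x.

Definition normal_ideal (N : A -> Prop) : Prop :=
  lower_set N /\ N = lower_bounds (upper_bounds N).

Definition rel_ann (a b : A) : A -> Prop := fun x => Order.meet a x <= b.

Definition proHeyting : Prop := forall a b : A, normal_ideal (rel_ann a b).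

Definition is_filter (F : A -> Prop) : Prop :=
  F \top /\ (forall x y, F x -> x <= y -> F y) /\
  (forall x y, F x -> F y -> F (Order.meet x y)).

Definition is_prime_filter (F : A -> Prop) : Prop :=
  is_filter F /\ ~ F \bot /\ (forall x y, F (Order.join x y) -> F x \/ F y).

Definition PSpace := {F : A -> Prop | is_prime_filter F}.

Definition ple (x y : PSpace) : Prop := forall a, proj1_sig x a -> proj1_sig y a.

Definition sfun (a : A) : PSpace -> Prop := fun x => proj1_sig x a.

Definition basic (a b : A) : PSpace -> Prop := fun x => sfun a x /\ ~ sfun b x.

Definition is_open (S : PSpace -> Prop) : Prop :=
  forall x, S x -> exists a b, basic a b x /\ (forall y, basic a b y -> S y).

Definition compl (S : PSpace -> Prop) : PSpace -> Prop := fun x => ~ S x.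
Definition setminus (S T : PSpace -> Prop) : PSpace -> Prop := fun x => S x /\ ~ T x.

Definition is_clopen (S : PSpace -> Prop) : Prop := is_open S /\ is_open (compl S).

Definition interior (S : PSpace -> Prop) : PSpace -> Prop :=
  fun x => exists W, is_open W /\ W x /\ (forall y, W y -> S y).

Definition closure (S : PSpace -> Prop) : PSpace -> Prop :=
  fun x => forall W, is_open W -> W x -> exists y, W y /\ S y.

Definition up (S : PSpace -> Prop) : PSpace -> Prop :=
  fun y => exists x, S x /\ ple x y.
Definition down (S : PSpace -> Prop) : PSpace -> Prop :=
  fun y => exists x, S x /\ ple y x.

Definition is_upset (S : PSpace -> Prop) : Prop :=
  forall x y, S x -> ple x y -> S y.

Definition is_clopen_upset (S : PSpace -> Prop) : Prop := is_clopen S /\ is_upset S.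

Definition cl2 (S : PSpace -> Prop) : PSpace -> Prop := up (closure S).
Definition int1 (S : PSpace -> Prop) : PSpace -> Prop := compl (down (compl (interior S))).

Definition DMset (U : PSpace -> Prop) : Prop :=
  is_open U /\ is_upset U /\ int1 (cl2 U) = U.

End Priestley.

(* Main.v *)
Require Import Defs.
From mathcomp Require Import all_boot all_order.
From mathcomp Require Import boolp.
From mathcomp Require classical_sets.
From Stdlib Require Import Classical FunctionalExtensionality PropExtensionality.
Set Implicit Arguments. Unset Strict Implicit. Unset Printing Implicit Defensive.
Import Order.TTheory.
Local Open Scope order_scope.

Section Gen.
Context {disp : Order.disp_t} (A : tbDistrLatticeType disp).

Definition is_ideal (I : A -> Prop) :=
  I \bot /\ (forall x y, I x -> y <= x -> I y) /\ (forall x y, I x -> I y -> I (x `|` y)).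

Lemma dist_key (f a j : A) : f `&` a <= j -> f <= j `|` a -> f <= j.
Proof.
move=> h1 h2; rewrite -(meet_l h2) meetUr leUx leIr /=; exact: h1.
Qed.

Variable R : A -> A -> Prop.
Hypothesis R0 : forall x, ~ R x x.
Hypothesis R1 : forall f j f' j', R f j -> f <= f' -> j' <= j -> R f' j'.
Hypothesis R2 : forall f j a, R f j -> R (f `&` a) j \/ R f (j `|` a).

Definition Pp (G I : A -> Prop) (p : (A -> Prop) * (A -> Prop)) :=
  is_filter p.1 /\ (forall x, G x -> p.1 x) /\ is_ideal p.2 /\ (forall x, I x -> p.2 x)
  /\ (forall f j, p.1 f -> p.2 j -> R f j).

Lemma gen_prime (G I : A -> Prop) : is_filter G -> is_ideal I ->
  (forall g i, G g -> I i -> R g i) ->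
  exists F, is_prime_filter F /\ (forall g, G g -> F g) /\ (forall i, I i -> ~ F i)
    /\ (forall f j, F f -> ~ F j -> R f j).
Proof.
move=> HG HI HGI.
pose T := {p | Pp G I p}.
pose Rl (s t : T) := `[< (forall x, (sval s).1 x -> (sval t).1 x) /\
                         (forall x, (sval s).2 x -> (sval t).2 x) >].
have P0 : Pp G I (G, I) by split => //; split => //; split.
pose t0 : T := exist _ (G, I) P0.
have t0le : forall s : T, Rl t0 s.
  by move=> [[F J] [? [? [? [? ?]]]]]; apply/asboolP; split.
have [t tmax] : exists t, classical_sets.premaximal Rl t.
  apply: (@classical_sets.ZL_preorder T t0 Rl).
  - by move=> s; apply/asboolP; split.
  - move=> r s t /asboolP [h1 h2] /asboolP [h3 h4]; apply/asboolP; split; auto.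
  move=> C Ctot.
  pose C' := fun c => C c \/ c = t0.
  have tot' : forall c1 c2, C' c1 -> C' c2 -> Rl c1 c2 \/ Rl c2 c1.
    move=> c1 c2 [h1|->] [h2|->]; [exact: Ctot| by right | by left | by left].
  pose Fu := fun x => exists c, C' c /\ (sval c).1 x.
  pose Ju := fun x => exists c, C' c /\ (sval c).2 x.
  have Pu : Pp G I (Fu, Ju).
    split; [|split; [|split; [|split]]] => /=.
    - split; [|split].
      + exists t0; split; [by right|]; by case: HG.
      + move=> x y [c [Cc Fx]] xy; exists c; split => //.
        by case: (svalP c) => [[_ [hu _]] _]; apply: hu Fx xy.
      + move=> x y [c1 [C1 F1]] [c2 [C2 F2]].
        case: (tot' _ _ C1 C2) => /asboolP [h _].
        * exists c2; split => //; case: (svalP c2) => [[_ [_ hm]] _]; apply: hm => //; exact: h.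
        * exists c1; split => //; case: (svalP c1) => [[_ [_ hm]] _]; apply: hm => //; exact: h.
    - by move=> x Gx; exists t0; split; [right|].
    - split; [|split].
      + by exists t0; split; [right|]; case: HI.
      + move=> x y [c [Cc Jx]] xy; exists c; split => //.
        by case: (svalP c) => [_ [_ [[_ [hd _]] _]]]; apply: hd Jx xy.
      + move=> x y [c1 [C1 F1]] [c2 [C2 F2]].
        case: (tot' _ _ C1 C2) => /asboolP [_ h].
        * exists c2; split => //; case: (svalP c2) => [_ [_ [[_ [_ hj]] _]]]; apply: hj => //; exact: h.
        * exists c1; split => //; case: (svalP c1) => [_ [_ [[_ [_ hj]] _]]]; apply: hj => //; exact: h.
    - by move=> x Ix; exists t0; split; [right|].
    - move=> f j [c1 [C1 F1]] [c2 [C2 F2]].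
      case: (tot' _ _ C1 C2) => /asboolP [h h'].
      * case: (svalP c2) => [_ [_ [_ [_ hr]]]]; apply: hr => //; exact: h.
      * case: (svalP c1) => [_ [_ [_ [_ hr]]]]; apply: hr => //; exact: h'.
  exists (exist _ (Fu, Ju) Pu) => s Cs; apply/asboolP; split => /= x hx.
  - by exists s; split => //; left.
  - by exists s; split => //; left.
case: t tmax => [[F J] HP] tmax.
case: (HP) => /= [HF [GF [HJ [IJ RFJ]]]].
case: (HF) => [Ftop [Fup Fmeet]].
case: (HJ) => [Jbot [Jdown Jjoin]].
have FJ : forall a, F a \/ J a.
  move=> a.
  pose Fa := fun x => exists f, F f /\ f `&` a <= x.
  pose Ja := fun x => exists j, J j /\ x <= j `|` a.
  have FaF : is_filter Fa.
    split; [|split].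
    - by exists \top; split => //; exact: lex1.
    - move=> x y [f [Ff h]] xy; exists f; split => //; exact: le_trans h xy.
    - move=> x y [f1 [F1 h1]] [f2 [F2 h2]]; exists (f1 `&` f2); split; first exact: Fmeet.
      rewrite lexI; apply/andP; split.
      + apply: le_trans h1; apply: leI2 => //; exact: leIl.
      + apply: le_trans h2; apply: leI2 => //; exact: leIr.
  have JaI : is_ideal Ja.
    split; [|split].
    - by exists \bot; split => //; exact: le0x.
    - move=> x y [j [Jj h]] yx; exists j; split => //; exact: le_trans yx h.
    - move=> x y [j1 [J1 h1]] [j2 [J2 h2]]; exists (j1 `|` j2); split; first exact: Jjoin.
      rewrite leUx; apply/andP; split.
      + apply: (le_trans h1); apply: leU2 => //; exact: leUl.
      + apply: (le_trans h2); apply: leU2 => //; exact: leUr.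
  have [c1|c2] : (forall f j, F f -> J j -> R (f `&` a) j) \/
                 (forall f j, F f -> J j -> R f (j `|` a)).
  - apply: NNPP => hn.
    have [h1 h2] := not_or_and _ _ hn.
    have [f1 h1'] := not_all_ex_not _ _ h1.
    have [j1 h1''] := not_all_ex_not _ _ h1'.
    have [F1 h1'''] := imply_to_and _ _ h1''.
    have [J1 n1] := imply_to_and _ _ h1'''.
    have [f2 h2'] := not_all_ex_not _ _ h2.
    have [j2 h2''] := not_all_ex_not _ _ h2'.
    have [F2 h2'''] := imply_to_and _ _ h2''.
    have [J2 n2] := imply_to_and _ _ h2'''.
    have := RFJ (f1 `&` f2) (j1 `|` j2) (Fmeet _ _ F1 F2) (Jjoin _ _ J1 J2).
    move=> /(R2 a) [h|h].
    + apply: n1; apply: R1 h _ _; last exact: leUl.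
      apply: leI2 => //; exact: leIl.
    + apply: n2; apply: R1 h _ _; first exact: leIr.
      apply: leU2 => //; exact: leUr.
  - have Pa : Pp G I (Fa, J).
      split => //=; split; [|split => //; split => //].
      + by move=> x Gx; exists x; split; [exact: GF | exact: leIl].
      + move=> x j [f [Ff h]] Jj; apply: R1 (c1 f j Ff Jj) h _; exact: lexx.
    have := tmax (exist _ (Fa, J) Pa).
    have le1 : Rl (exist _ (F, J) HP) (exist _ (Fa, J) Pa).
      apply/asboolP; split => //= x Fx; exists x; split => //; exact: leIl.
    move=> /(_ le1) /asboolP [/= h _]; left; apply: h.
    by exists \top; split => //; rewrite meet1x.
  - have Pa : Pp G I (F, Ja).
      split => //=; split => //; split => //; split.
      + by move=> x Ix; exists x; split; [exact: IJ | exact: leUl].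
      + move=> f x Ff [j [Jj h]]; apply: R1 (c2 f j Ff Jj) _ h; exact: lexx.
    have := tmax (exist _ (F, Ja) Pa).
    have le1 : Rl (exist _ (F, J) HP) (exist _ (F, Ja) Pa).
      apply/asboolP; split => //= x Jx; exists x; split => //; exact: leUl.
    move=> /(_ le1) /asboolP [/= _ h]; right; apply: h.
    by exists \bot; split => //; rewrite join0x.
have disj : forall x, F x -> J x -> False by move=> x Fx Jx; exact: (R0 (RFJ _ _ Fx Jx)).
have nFJ : forall x, ~ F x -> J x by move=> x nF; case: (FJ x).
exists F; split; [split => //; split|split; [|split]].
- by move=> Fb; exact: disj Fb Jbot.
- move=> x y Fxy; apply: NNPP => hn; have [nx ny] := not_or_and _ _ hn.
  exact: disj Fxy (Jjoin _ _ (nFJ _ nx) (nFJ _ ny)).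
- exact: GF.
- by move=> i Ii Fi; exact: disj Fi (IJ _ Ii).
- by move=> f j Ff nFj; apply: RFJ => //; exact: nFJ.
Qed.
End Gen.

Section Pri.
Context {disp : Order.disp_t} (A : tbDistrLatticeType disp).
Implicit Types (a b c d : A).

Lemma s_prime (x : PSpace A) : is_prime_filter (proj1_sig x). Proof. exact: proj2_sig x. Qed.
Lemma s_top (x : PSpace A) : sfun \top x. Proof. by case: (s_prime x) => [[]]. Qed.
Lemma s_bot (x : PSpace A) : ~ sfun \bot x. Proof. by case: (s_prime x) => [_ []]. Qed.
Lemma s_up (x : PSpace A) a b : sfun a x -> a <= b -> sfun b x.
Proof. by case: (s_prime x) => [[_ [h _]] _]; apply: h. Qed.
Lemma s_meet (x : PSpace A) a b : sfun a x -> sfun b x -> sfun (a `&` b) x.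
Proof. by case: (s_prime x) => [[_ [_ h]] _]; apply: h. Qed.
Lemma s_join (x : PSpace A) a b : sfun (a `|` b) x -> sfun a x \/ sfun b x.
Proof. by case: (s_prime x) => [_ [_ h]]; apply: h. Qed.
Lemma s_nojoin (x : PSpace A) a b : ~ sfun a x -> ~ sfun b x -> ~ sfun (a `|` b) x.
Proof. by move=> ha hb /s_join []. Qed.

Lemma le_filter c : is_filter (fun t : A => c <= t).
Proof.
split; [exact: lex1|split]; first by move=> x y h1 h2; exact: le_trans h1 h2.
by move=> x y h1 h2; rewrite lexI h1 h2.
Qed.

Lemma down_ideal d : is_ideal (fun t : A => t <= d).
Proof.
split; [exact: le0x|split]; first by move=> x y h1 h2; exact: le_trans h2 h1.
by move=> x y h1 h2; rewrite leUx h1 h2.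
Qed.

Lemma gen_point (R : A -> A -> Prop) G I :
  (forall x, ~ R x x) ->
  (forall f j f' j', R f j -> f <= f' -> j' <= j -> R f' j') ->
  (forall f j a, R f j -> R (f `&` a) j \/ R f (j `|` a)) ->
  is_filter G -> is_ideal I -> (forall g i, G g -> I i -> R g i) ->
  exists x : PSpace A, (forall g, G g -> sfun g x) /\ (forall i, I i -> ~ sfun i x)
    /\ (forall f j, sfun f x -> ~ sfun j x -> R f j).
Proof.
move=> R0 R1 R2 HG HI HGI.
have [F [HF [h1 [h2 h3]]]] := gen_prime R0 R1 R2 HG HI HGI.
by exists (exist _ F HF).
Qed.

Lemma Rle0 : forall x : A, ~ ~ x <= x. Proof. by move=> x; rewrite lexx. Qed.
Lemma Rle1 : forall f j f' j' : A, ~ f <= j -> f <= f' -> j' <= j -> ~ f' <= j'.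
Proof. move=> f j f' j' h h1 h2 h3; apply: h; exact: le_trans h1 (le_trans h3 h2). Qed.
Lemma Rle2 : forall f j a : A, ~ f <= j -> ~ f `&` a <= j \/ ~ f <= j `|` a.
Proof.
move=> f j a h; apply: NNPP => hn; have [h1 h2] := not_or_and _ _ hn.
apply: h; apply: dist_key (NNPP _ h1) (NNPP _ h2).
Qed.

Lemma gen_le G I : is_filter G -> is_ideal I -> (forall g i, G g -> I i -> ~ g <= i) ->
  exists x : PSpace A, (forall g, G g -> sfun g x) /\ (forall i, I i -> ~ sfun i x).
Proof.
move=> HG HI HGI.
have [x [h1 [h2 _]]] := gen_point Rle0 Rle1 Rle2 HG HI HGI.
by exists x.
Qed.

Lemma sep c d : ~ c <= d -> exists x : PSpace A, sfun c x /\ ~ sfun d x.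
Proof.
move=> h.
have [x [h1 h2]] := gen_le (le_filter c) (down_ideal d) (fun g i hg hi hgi => h (le_trans hg (le_trans hgi hi))).
exists x; split; [exact: h1 | exact: h2].
Qed.

Lemma sub_le c d : (forall x : PSpace A, sfun c x -> sfun d x) -> c <= d.
Proof. move=> h; apply: NNPP => /sep [x [h1 h2]]; exact: h2 (h _ h1). Qed.

Lemma open_ext (S T : PSpace A -> Prop) : (forall x, S x <-> T x) -> is_open S -> is_open T.
Proof.
move=> e hS x /e /hS [a [b [h1 h2]]]; exists a, b; split => // y /h2 /e //.
Qed.

Lemma open_s a : is_open (sfun a).
Proof. move=> x h; exists a, \bot; split; first by split => //; exact: s_bot. by move=> y []. Qed.

Lemma open_basic a b : is_open (basic a b).
Proof. by move=> x h; exists a, b; split. Qed.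

Lemma open_I (S T : PSpace A -> Prop) : is_open S -> is_open T -> is_open (fun x => S x /\ T x).
Proof.
move=> hS hT x [/hS [a [b [[a1 b1] s1]]] /hT [c [d [[c1 d1] t1]]]].
exists (a `&` c), (b `|` d); split; first by split; [exact: s_meet | exact: s_nojoin].
move=> y [y1 y2]; split.
- apply: s1; split; [exact: s_up y1 (leIl _ _)| move=> hb; apply: y2; exact: s_up hb (leUl _ _)].
- apply: t1; split; [exact: s_up y1 (leIr _ _)| move=> hb; apply: y2; exact: s_up hb (leUr _ _)].
Qed.

Lemma open_U (S T : PSpace A -> Prop) : is_open S -> is_open T -> is_open (fun x => S x \/ T x).
Proof.
move=> hS hT x [/hS [a [b [h1 h2]]]|/hT [a [b [h1 h2]]]]; exists a, b; split => // y hy.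
- by left; apply: h2.
- by right; apply: h2.
Qed.

Lemma clopen_s a : is_clopen_upset (sfun a).
Proof.
split; [split|].
- exact: open_s.
- move=> x h; exists \top, a; split; first by split => //; exact: s_top.
  by move=> y [].
- by move=> x y h hxy; apply: hxy.
Qed.

Lemma cpt (U : PSpace A -> Prop) G I : is_open (compl U) -> is_filter G -> is_ideal I ->
  (forall g i, G g -> I i -> exists w, U w /\ sfun g w /\ ~ sfun i w) ->
  exists w, U w /\ (forall g, G g -> sfun g w) /\ (forall i, I i -> ~ sfun i w).
Proof.
move=> hU HG HI HGI.
pose R := fun f j => exists w, U w /\ sfun f w /\ ~ sfun j w.
have R0 : forall x, ~ R x x by move=> x [w [_ [h1 h2]]].
have R1 : forall f j f' j', R f j -> f <= f' -> j' <= j -> R f' j'.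
  move=> f j f' j' [w [h0 [h1 h2]]] l1 l2; exists w; split => //; split.
  - exact: s_up h1 l1.
  - by move=> h3; apply: h2; exact: s_up h3 l2.
have R2 : forall f j a, R f j -> R (f `&` a) j \/ R f (j `|` a).
  move=> f j a [w [h0 [h1 h2]]]; case: (classic (sfun a w)) => ha.
  - by left; exists w; split => //; split => //; exact: s_meet.
  - by right; exists w; split => //; split => //; exact: s_nojoin.
have [x [h1 [h2 h3]]] := gen_point R0 R1 R2 HG HI HGI.
exists x; split => //.
apply: NNPP => nU; have [c [d [[c1 d1] hcd]]] := hU x nU.
have [w [wU [cw dw]]] := h3 c d c1 d1.
exact: hcd w (conj cw dw) wU.
Qed.

Lemma open_upset_basis (U : PSpace A -> Prop) (w : PSpace A) : is_open U -> is_upset U -> U w ->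
  exists a, sfun a w /\ forall v, sfun a v -> U v.
Proof.
move=> hU uU Uw; apply: NNPP => hn.
have hc : is_open (compl (compl U)).
  apply: open_ext hU => x; split; [by move=> h h'| exact: NNPP].
have HG : is_filter (proj1_sig w) by case: (s_prime w).
have key : forall g i, proj1_sig w g -> i <= \bot ->
    exists v, compl U v /\ sfun g v /\ ~ sfun i v.
  move=> g i hg hi.
  have f := not_ex_all_not _ _ hn g.
  case: (not_and_or _ _ f) => // hsub.
  have [v hv] := not_all_ex_not _ _ hsub.
  have [h1 h2] := imply_to_and _ _ hv.
  exists v; split => //; split => //.
  move=> h; exact: (s_bot (s_up h hi)).
have [v [nUv [h1 _]]] := cpt hc HG (down_ideal \bot) key.
exact: nUv (uU _ _ Uw h1).
Qed.
End Pri.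

Section Main.
Context {disp : Order.disp_t} (A : tbDistrLatticeType disp).
Implicit Types (a b c d : A).

Lemma clopen_upset_eq (U : PSpace A -> Prop) : is_clopen_upset U -> exists a, U = sfun a.
Proof.
move=> [[oU cU] uU].
pose I := fun t : A => forall v, sfun t v -> U v.
have HI : is_ideal I.
  split; [|split].
  - by move=> v /s_bot.
  - by move=> x y hx yx v hv; apply: hx; exact: s_up hv yx.
  - by move=> x y hx hy v /s_join [/hx|/hy].
case: (classic (exists a, I a /\ forall w, U w -> sfun a w)) => [[a [h1 h2]]|hn].
  exists a; apply: functional_extensionality => w; apply: propositional_extensionality.
  by split; [exact: h2| exact: h1].
have key : forall g i, \top <= g -> I i -> exists w, U w /\ sfun g w /\ ~ sfun i w.
  move=> g i hg hi.
  have f := not_ex_all_not _ _ hn i.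
  case: (not_and_or _ _ f) => // hsub.
  have [w hw] := not_all_ex_not _ _ hsub.
  have [h1 h2] := imply_to_and _ _ hw.
  exists w; split => //; split => //; exact: s_up (s_top w) hg.
have [w [Uw [_ h]]] := cpt cU (le_filter \top) HI key.
have [a [aw ha]] := open_upset_basis oU uU Uw.
by case: (h a ha).
Qed.

Definition Wd a b : PSpace A -> Prop := compl (down (setminus (sfun a) (sfun b))).

Lemma W_char a b (x : PSpace A) : Wd a b x <-> exists c, sfun c x /\ a `&` c <= b.
Proof.
split.
- move=> hW; apply: NNPP => hn.
  pose G := fun t : A => exists c, sfun c x /\ a `&` c <= t.
  have HG : is_filter G.
    split; [|split].
    + by exists \top; split; [exact: s_top| exact: lex1].
    + move=> s t [c [h1 h2]] st; exists c; split => //; exact: le_trans h2 st.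
    + move=> s t [c1 [h1 h2]] [c2 [h3 h4]]; exists (c1 `&` c2); split; first exact: s_meet.
      rewrite lexI; apply/andP; split.
      * apply: le_trans h2; apply: leI2 => //; exact: leIl.
      * apply: le_trans h4; apply: leI2 => //; exact: leIr.
  have [z [h1 h2]] := gen_le HG (down_ideal b) (fun g i hg hi hgi =>
     match hg with ex_intro c (conj hc hac) => hn (ex_intro _ c (conj hc (le_trans hac (le_trans hgi hi)))) end).
  apply: hW; exists z; split; [split|].
  + apply: h1; exists \top; split; [exact: s_top| by rewrite meetx1].
  + by apply: h2; exact: lexx.
  + by move=> t ht; apply: h1; exists t; split => //; exact: leIr.
- move=> [c [cx h]] [z [[az nbz] xz]].
  apply: nbz; apply: s_up h; apply: s_meet => //; exact: xz.
Qed.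

Lemma W_open a b : is_open (Wd a b).
Proof.
move=> x /W_char [c [cx h]]; exists c, \bot; split; first by split => //; exact: s_bot.
by move=> y [cy _]; apply/W_char; exists c.
Qed.

Lemma compl_down_upset (S : PSpace A -> Prop) : is_upset (compl (down S)).
Proof.
move=> x y hx xy [z [Sz yz]]; apply: hx; exists z; split => // t ht; exact: yz (xy _ ht).
Qed.

Lemma closure_ub (W : PSpace A -> Prop) (N : A -> Prop) (x : PSpace A) :
  (forall y, W y -> exists c, sfun c y /\ N c) -> Defs.closure W x ->
  forall u, upper_bounds N u -> sfun u x.
Proof.
move=> hW cl u hu; apply: NNPP => nu.
have [y [[_ nuy] Wy]] := cl (basic \top u) (@open_basic _ _ \top u) (conj (s_top x) nu).
have [c [cy Nc]] := hW y Wy.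
exact: nuy (s_up cy (hu c Nc)).
Qed.

Lemma sub_int1cl2 (W : PSpace A -> Prop) : is_open W -> is_upset W ->
  forall y, W y -> int1 (cl2 W) y.
Proof.
move=> oW uW y Wy [z [nz yz]]; apply: nz; exists W; split => //; split; first exact: uW Wy yz.
move=> v Wv; exists v; split => //.
by move=> O _ Ov; exists v.
Qed.

Lemma int1cl2_mono (S T : PSpace A -> Prop) : (forall x, S x -> T x) ->
  forall y, int1 (cl2 S) y -> int1 (cl2 T) y.
Proof.
move=> ST y hy [z [nz yz]]; apply: hy; exists z; split => //.
move=> [O [oO [Oz hO]]]; apply: nz; exists O; split => //; split => //.
move=> v /hO [x [clx xv]]; exists x; split => //.
move=> O' oO' O'x; have [t [O't St]] := clx O' oO' O'x; exists t; split => //; exact: ST.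
Qed.

Lemma int1_elim (S : PSpace A -> Prop) (y z : PSpace A) : int1 S y -> ple y z -> interior S z.
Proof. by move=> hy yz; apply: NNPP => nz; apply: hy; exists z. Qed.

Lemma DM_intro (W : PSpace A -> Prop) : is_open W -> is_upset W ->
  (forall y, int1 (cl2 W) y -> W y) -> DMset W.
Proof.
move=> oW uW h; split => //; split => //.
apply: functional_extensionality => y; apply: propositional_extensionality.
split; [exact: h| exact: sub_int1cl2].
Qed.

Lemma DM_of_normal a b : normal_ideal (rel_ann a b) -> DMset (Wd a b).
Proof.
move=> [ls eqN].
pose N := rel_ann a b.
pose M := lower_bounds (upper_bounds N).
apply: DM_intro; [exact: W_open| exact: compl_down_upset|].
move=> y hy; apply: NNPP => nWy.
have ny : forall c, sfun c y -> ~ N c by move=> c cy Nc; apply: nWy; apply/W_char; exists c.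
pose R := fun f j : A => exists u, upper_bounds N u /\ ~ f <= j `|` u.
have R0 : forall x, ~ R x x by move=> x [u [_ h]]; apply: h; exact: leUl.
have R1 : forall f j f' j', R f j -> f <= f' -> j' <= j -> R f' j'.
  move=> f j f' j' [u [hu h]] l1 l2; exists u; split => // h'; apply: h.
  apply: le_trans l1 (le_trans h' _); apply: leU2 => //.
have R2 : forall f j a', R f j -> R (f `&` a') j \/ R f (j `|` a').
  move=> f j a' [u [hu h]]; apply: NNPP => hn; have [h1 h2] := not_or_and _ _ hn.
  apply: h; apply: (@dist_key _ _ f a').
  + apply: NNPP => h3; apply: h1; exists u; split => //.
  + apply: NNPP => h3; apply: h2; exists u; split => // h4; apply: h3.
    by move: h4; rewrite -joinA [a' `|` u]joinC joinA.
have HG : is_filter (proj1_sig y) by case: (s_prime y).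
have HI : is_ideal M.
  split; [|split].
  - by move=> x _; exact: le0x.
  - by move=> x z hx zx u hu; exact: le_trans zx (hx u hu).
  - by move=> x z hx hz u hu; rewrite leUx (hx u hu) (hz u hu).
have HGI : forall g i, proj1_sig y g -> M i -> R g i.
  move=> g i hg hi; apply: NNPP => hn.
  have Mg : M g.
    move=> u hu; apply: NNPP => ngu; apply: hn; exists u; split => // h.
    apply: ngu; apply: le_trans h _; rewrite leUx (hi u hu) lexx //.
  move: Mg; rewrite /M -eqN => Ng; exact: ny hg Ng.
have [z [yz [_ Rz]]] := gen_point R0 R1 R2 HG HI HGI.
have [O [oO [Oz hO]]] := int1_elim hy yz.
have [c [d [[cz dz] hb]]] := oO z Oz.
have [u [hu n]] := Rz c d cz dz.
have [v [cv nv]] := sep n.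
have /hO [x [clx xv]] : O v.
  apply: hb; split => // dv; apply: nv; exact: s_up dv (leUl _ _).
have hW : forall y', Wd a b y' -> exists c, sfun c y' /\ N c by move=> y' /W_char.
apply: nv; apply: s_up (xv _ (closure_ub hW clx hu)) (leUr _ _).
Qed.

Lemma normal_of_DM a b : DMset (Wd a b) -> normal_ideal (rel_ann a b).
Proof.
move=> [oW [uW eqW]].
pose N := rel_ann a b.
split.
  move=> x y hx yx; apply: le_trans hx; apply: leI2 => //.
apply: functional_extensionality => m; apply: propositional_extensionality; split.
  by move=> hm u hu; exact: hu m hm.
move=> hm; apply: NNPP => /sep [y [amy nby]].
have key : int1 (cl2 (Wd a b)) y.
  move=> [z [nz yz]]; apply: nz; exists (sfun m); split; first exact: open_s.
  split; first exact: s_up (yz _ amy) (leIr _ _).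
  move=> w mw.
  pose R := fun f j : A => exists n, N n /\ ~ f `&` n <= j.
  have R0 : forall x, ~ R x x by move=> x [n [_ h]]; apply: h; exact: leIl.
  have R1 : forall f j f' j', R f j -> f <= f' -> j' <= j -> R f' j'.
    move=> f j f' j' [n [hn h]] l1 l2; exists n; split => // h'; apply: h.
    apply: le_trans _ (le_trans h' l2); apply: leI2 => //.
  have R2 : forall f j a', R f j -> R (f `&` a') j \/ R f (j `|` a').
    move=> f j a' [n [hn h]]; apply: NNPP => hn'; have [h1 h2] := not_or_and _ _ hn'.
    apply: h; apply: (@dist_key _ _ (f `&` n) a').
    + apply: NNPP => h3; apply: h1; exists n; split => // h4; apply: h3.
      by move: h4; rewrite -meetA [a' `&` n]meetC meetA.
    + apply: NNPP => h3; apply: h2; exists n; split => //.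
  have HG : is_filter (upper_bounds N).
    split; [|split].
    - by move=> x _; exact: lex1.
    - by move=> x z0 hx xz0 t ht; exact: le_trans (hx t ht) xz0.
    - by move=> x z0 hx hz0 t ht; rewrite lexI (hx t ht) (hz0 t ht).
  have HI : is_ideal (fun t => ~ sfun t w).
    split; [|split].
    - exact: s_bot.
    - by move=> x z0 hx zx hz0; apply: hx; exact: s_up hz0 zx.
    - by move=> x z0 hx hz0; exact: s_nojoin.
  have HGI : forall g i, upper_bounds N g -> ~ sfun i w -> R g i.
    move=> g i hg hi; apply: NNPP => hn.
    have ui : upper_bounds N i.
      move=> n Nn; apply: NNPP => h; apply: hn; exists n; split => // h'; apply: h.
      apply: le_trans h'; rewrite lexI (hg n Nn) lexx //.
    exact: hi (s_up mw (hm i ui)).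
  have [x [h1 [h2 h3]]] := gen_point R0 R1 R2 HG HI HGI.
  exists x; split.
  + move=> O oO Ox; have [c [d [[cx dx] hb]]] := oO x Ox.
    have [n [Nn h]] := h3 c d cx dx.
    have [v [cnv dv]] := sep h.
    exists v; split.
    * apply: hb; split => //; exact: s_up cnv (leIl _ _).
    * apply/W_char; exists n; split => //; exact: s_up cnv (leIr _ _).
  + by move=> t xt; apply: NNPP => nt; exact: h2 nt xt.
move: key; rewrite eqW => /W_char [c [cy h]].
apply: nby; apply: s_up (s_meet amy cy) _.
apply: le_trans h; apply: leI2 => //; exact: leIl.
Qed.

Lemma DM_of_clopen
  (H2 : forall U V : PSpace A -> Prop, is_clopen_upset U -> is_clopen_upset V ->
        DMset (compl (down (setminus U V))))
  (U : PSpace A -> Prop) : is_clopen U -> DMset (compl (down U)).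
Proof.
move=> [oU cU].
apply: DM_intro; last first; [|exact: compl_down_upset|].
- move=> y hy; apply: NNPP => /NNPP [w [Uw yw]].
  have [c [d [[cw dw] hb]]] := oU w Uw.
  have [oW' [uW' eqW']] := H2 _ _ (clopen_s c) (clopen_s d).
  have := int1cl2_mono (T := compl (down (setminus (sfun c) (sfun d)))) _ hy.
  rewrite eqW'; apply.
  + move=> x hx [z [sz xz]]; apply: hx; exists z; split => //; exact: hb.
  + by exists w; split.
- move=> y ny.
  have [a [ay ha]] : exists a, sfun a y /\ forall w, U w -> ~ sfun a w.
    apply: NNPP => hn.
    have key : forall g i, proj1_sig y g -> i <= \bot ->
        exists w, U w /\ sfun g w /\ ~ sfun i w.
      move=> g i hg hi.
      have f := not_ex_all_not _ _ hn g.
      case: (not_and_or _ _ f) => // hsub.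
      have [w hw] := not_all_ex_not _ _ hsub.
      have [h1 h2] := imply_to_and _ _ hw.
      exists w; split => //; split; first exact: NNPP.
      move=> h; exact: (s_bot (s_up h hi)).
    have HG : is_filter (proj1_sig y) by case: (s_prime y).
    have [w [Uw [h1 _]]] := cpt cU HG (down_ideal \bot) key.
    by apply: ny; exists w.
  exists a, \bot; split; first by split => //; exact: s_bot.
  move=> v [av _] [w [Uw vw]]; exact: ha w Uw (vw _ av).
Qed.

Lemma clopen_diff (U V : PSpace A -> Prop) : is_clopen_upset U -> is_clopen_upset V ->
  is_clopen (setminus U V).
Proof.
move=> [[oU cU] _] [[oV cV] _]; split.
- exact: open_I oU cV.
- apply: open_ext (open_U cU oV) => x; split.
  + by move=> [h|h] [h1 h2].
  + move=> h; case: (classic (U x)) => hU; [right|left] => //.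
    by apply: NNPP => nV; apply: h.
Qed.

End Main.

Theorem theorem5p11 (disp : Order.disp_t) (A : tbDistrLatticeType disp) :
  (proHeyting A <->
     (forall U V : PSpace A -> Prop, is_clopen_upset U -> is_clopen_upset V ->
        DMset (compl (down (setminus U V))))) /\
  ((forall U V : PSpace A -> Prop, is_clopen_upset U -> is_clopen_upset V ->
        DMset (compl (down (setminus U V)))) <->
     (forall U : PSpace A -> Prop, is_clopen U -> DMset (compl (down U)))).
Proof.
split; split.
- move=> H1 U V hU hV.
  have [a ->] := clopen_upset_eq hU.
  have [b ->] := clopen_upset_eq hV.
  exact: DM_of_normal (H1 a b).
- move=> H2 a b; apply: normal_of_DM; exact: H2 (clopen_s a) (clopen_s b).
- move=> H2 U hU; apply: (DM_of_clopen H2); exact: hU.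
- move=> H3 U V hU hV; apply: H3; exact: clopen_diff.
Qed.
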